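(* Let $X\colon\mathbf{CommRing}\to\mathbf{Set}$ be a functor that preserves products, and let $p$ be a prime. Let $Z_{X,p}$ be the species such that a $Z_{X,p}$-structure on a finite set is a way to make that set into a ring $k_p$ that is a finite product of finite fields of characteristic $p$ together with an element of $X(k_p)$, and let $F_{X,p}$ be the species such that an $F_{X,p}$-structure on a finite set is a way to make that set into a field $k$ of characteristic $p$ together with an element of $X(k)$. Then $Z_{X,p}\cong\exp_D(F_{X,p})$.
   Context: A species is a functor from the groupoid of finite sets and bijections to $\mathbf{Set}$ (structures are transported along bijections); a Dirichlet species is one with value $\emptyset$ on $\emptyset$. The one-element ring counts as the empty product of fields. Dirichlet product: a cartesian decomposition of a finite set $S$ is an ordered pair $(\pi_1,\pi_2)$ of equivalence relations on $S$ such that each $\pi_1$-class meets each $\pi_2$-class in exactly one element; with $S_i$ the set of $\pi_i$-classes, $(F\cdot_D G)(S)=\coprod_{(\pi_1,\pi_2)}F(S_1)\times G(S_2)$. This is symmetric monoidal with unit $I$, where $I(S)$ is a singleton if $|S|=1$ and empty otherwise. Dirichlet exponential: $F^n_D=F\cdot_D\cdots\cdot_D F$ ($n$ factors) for $n\ge1$, $F^0_D=I$; $S_n$ acts on $F^n_D$ via the symmetry; $\exp_D(F)=\coprod_{n\ge0}F^n_D/S_n$, computed pointwise. *)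

(* Defs.v *)
From HB Require Import structures.
From mathcomp Require Import all_boot all_order all_algebra all_fingroup.
Set Implicit Arguments. Unset Strict Implicit. Unset Printing Implicit Defensive.
Import GRing.Theory.
Local Open Scope ring_scope.

Record ringstr (S : Type) := RingStr {
  r0 : S; r1 : S; radd : S -> S -> S; ropp : S -> S; rmul : S -> S -> S;
  raddA : associative radd; raddC : commutative radd;
  radd0 : left_id r0 radd; raddN : left_inverse r0 ropp radd;
  rmulA : associative rmul; rmulC : commutative rmul;
  rmul1 : left_id r1 rmul; rmulD : left_distributive rmul radd }.

Definition rring (S : finType) (r : ringstr S) : Type := S.
HB.instance Definition _ (S : finType) (r : ringstr S) := Finite.on (rring r).
HB.instance Definition _ (S : finType) (r : ringstr S) :=
  GRing.isZmodule.Build (rring r) (@raddA _ r) (@raddC _ r) (@radd0 _ r) (@raddN _ r).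
HB.instance Definition _ (S : finType) (r : ringstr S) :=
  GRing.Zmodule_isComPzRing.Build (rring r) (@rmulA _ r) (@rmulC _ r) (@rmul1 _ r) (@rmulD _ r).

(* The category CommRing: MathComp's comPzRingType (commutative rings, *)
(* the zero ring allowed), morphisms {rmorphism R -> S}.              *)
Record CRingFunctor := {
  Fob :> comPzRingType -> Type;
  Fmap : forall R S : comPzRingType, {rmorphism R -> S} -> Fob R -> Fob S;
  Fmap_id : forall (R : comPzRingType) (x : Fob R),
      Fmap (idfun : {rmorphism R -> R}) x = x;
  Fmap_comp : forall (R S T : comPzRingType) (f : {rmorphism R -> S})
      (g : {rmorphism S -> T}) (x : Fob R),
      Fmap (g \o f : {rmorphism R -> T}) x = Fmap g (Fmap f x) }.

(* X preserves the empty product: terminal objects of CommRing (the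
   one-element rings) are sent to one-element sets. *)
Definition preserves_terminal (X : CRingFunctor) : Prop :=
  forall R : comPzRingType, (1 = 0 :> R) -> exists x : X R, forall y, y = x.

(* X preserves binary products: for every product cone
   (P, p1 : P -> R, p2 : P -> S) in CommRing, (X p1, X p2) is a product cone. *)
Definition preserves_binary_products (X : CRingFunctor) : Prop :=
  forall (P R S : comPzRingType) (p1 : {rmorphism P -> R}) (p2 : {rmorphism P -> S}),
    bijective (fun x : P => (p1 x, p2 x)) ->
    bijective (fun x : X P => (Fmap p1 x, Fmap p2 x)).

Definition preserves_products (X : CRingFunctor) : Prop :=
  preserves_terminal X /\ preserves_binary_products X.

(* R is a field of characteristic p (p is assumed prime in the theorem). *)
Definition is_field_charp (p : nat) (R : comPzRingType) : Prop :=
  [/\ (1 != 0 :> R), (forall x : R, x != 0 -> exists y, x * y = 1)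
    & (p%:R = 0 :> R)].

(* R is (isomorphic to) a finite product of finite fields of
   characteristic p: there are finitely many finite fields K_i of
   characteristic p and ring maps phi_i : R -> K_i such that the induced
   map R -> prod_i K_i is bijective.  n = 0 gives the one-element ring. *)
Definition fin_prod_ffields (p : nat) (R : comPzRingType) : Prop :=
  exists (n : nat) (K : 'I_n -> finFieldType) (phi : forall i, {rmorphism R -> K i}),
    [/\ (forall i, p \in [pchar (K i)]),
        (forall x y : R, (forall i, phi i x = phi i y) -> x = y)
      & (forall y : (forall i, K i), exists x : R, forall i, phi i x = y i)].

Record Zstr (X : CRingFunctor) (p : nat) (S : finType) := ZStr {
  z_ring : ringstr S;
  z_prod : fin_prod_ffields p (rring z_ring);
  z_pt : X (rring z_ring) }.

Record Fstr (X : CRingFunctor) (p : nat) (S : finType) := FStr {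
  f_ring : ringstr S;
  f_field : is_field_charp p (rring f_ring);
  f_pt : X (rring f_ring) }.

Definition ring_pt_transport (X : CRingFunctor) (S T : finType) (g : S -> T)
    (r : ringstr S) (r' : ringstr T) (x : X (rring r)) (x' : X (rring r')) : Prop :=
  exists h : {rmorphism rring r -> rring r'},
    (forall s : S, h s = g s) /\ Fmap h x = x'.

Definition Ztr (X : CRingFunctor) (p : nat) (S T : finType) (g : S -> T)
    (z : Zstr X p S) (z' : Zstr X p T) : Prop :=
  ring_pt_transport g (z_pt z) (z_pt z').

Definition Ftr (X : CRingFunctor) (p : nat) (S T : finType) (g : S -> T)
    (f : Fstr X p S) (f' : Fstr X p T) : Prop :=
  ring_pt_transport g (f_pt f) (f_pt f').

(* An equivalence relation on S is represented by its set of classes,  *)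
(* a partition P of S; blocks P is the finite set of its classes.      *)
Definition blocks (S : finType) (P : {set {set S}}) : finType :=
  {B : {set S} | B \in P}.

(* F^n_D(S): n equivalence relations pi_1..pi_n on S forming a cartesian
   decomposition (every choice of one class of each pi_i meets in
   exactly one element) together with F-structures on each S/pi_i. *)
Record dprodn (F : finType -> Type) (n : nat) (S : finType) := DProd {
  dp_part : 'I_n -> {set {set S}};
  dp_partition : forall i, partition (dp_part i) [set: S];
  dp_cart : forall B : (forall i, blocks (dp_part i)),
      #|\bigcap_(i < n) val (B i)| = 1%N;
  dp_str : forall i, F (blocks (dp_part i)) }.

(* The orbit relation of the action of S_n by permuting the factors. *)
Definition dp_orbit (F : finType -> Type) (n : nat) (S : finType)
    (x y : dprodn F n S) : Prop :=
  exists s : 'S_n,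
    existT (fun pi : 'I_n -> {set {set S}} => forall i, F (blocks (pi i)))
      (dp_part y) (dp_str y)
    = existT (fun pi : 'I_n -> {set {set S}} => forall i, F (blocks (pi i)))
      (fun i => dp_part x (s i)) (fun i => dp_str x (s i)).

Definition quot (T : Type) (R : T -> T -> Prop) : Type :=
  {C : T -> Prop | exists x, forall y, C y <-> R x y}.

(* exp_D(F)(S) = coprod_n F^n_D(S) / S_n *)
Definition expD (F : finType -> Type) (S : finType) : Type :=
  {n : nat & quot (@dp_orbit F n S)}.

Definition in_expD (F : finType -> Type) (n : nat) (S : finType)
    (x : dprodn F n S) (e : expD F S) : Prop :=
  exists C : quot (@dp_orbit F n S), e = existT _ n C /\ sval C x.

Definition dp_tr (F : finType -> Type)
    (FT : forall A B : finType, (A -> B) -> F A -> F B -> Prop)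
    (n : nat) (S T : finType) (g : S -> T) (x : dprodn F n S) (y : dprodn F n T) : Prop :=
  exists h : forall i, blocks (dp_part x i) -> blocks (dp_part y i),
    (forall i B, val (h i B) = g @: val B) /\
    (forall i, FT _ _ (h i) (dp_str x i) (dp_str y i)).

Definition expD_tr (F : finType -> Type)
    (FT : forall A B : finType, (A -> B) -> F A -> F B -> Prop)
    (S T : finType) (g : S -> T) (e : expD F S) (e' : expD F T) : Prop :=
  exists (n : nat) (x : dprodn F n S) (y : dprodn F n T),
    [/\ in_expD x e, in_expD y e' & dp_tr FT g x y].

(* Main.v *)
Require Import Defs.
From HB Require Import structures.
From mathcomp Require Import all_boot all_order all_algebra all_fingroup.
From Stdlib Require Import ProofIrrelevance FunctionalExtensionality PropExtensionality IndefiniteDescription Eqdep_dec PeanoNat.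
Set Implicit Arguments. Unset Strict Implicit. Unset Printing Implicit Defensive.
Import GRing.Theory.
Local Open Scope ring_scope.

Lemma fchoice (A B : Type) (R : A -> B -> Prop) :
  (forall a, exists b, R a b) -> exists f : A -> B, forall a, R a (f a).
Proof.
move=> H; exists (fun a => proj1_sig (constructive_indefinite_description _ (H a))).
by move=> a; case: (constructive_indefinite_description _ (H a)).
Qed.

Lemma dchoice (A : Type) (B : A -> Type) (R : forall a, B a -> Prop) :
  (forall a, exists b, R a b) -> exists f : (forall a, B a), forall a, R a (f a).
Proof.
move=> H; exists (fun a => proj1_sig (constructive_indefinite_description _ (H a))).
by move=> a; case: (constructive_indefinite_description _ (H a)).
Qed.

Definition mkfun (R S : comPzRingType) (f : R -> S)
  (Ha : zmod_morphism f) (Hm : monoid_morphism f) : R -> S := f.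
HB.instance Definition _ (R S : comPzRingType) (f : R -> S) Ha Hm :=
  GRing.isZmodMorphism.Build R S (@mkfun R S f Ha Hm) Ha.
HB.instance Definition _ (R S : comPzRingType) (f : R -> S) Ha Hm :=
  GRing.isMonoidMorphism.Build R S (@mkfun R S f Ha Hm) Hm.
Definition mkRM (R S : comPzRingType) (f : R -> S) Ha Hm : {rmorphism R -> S} :=
  (@mkfun R S f Ha Hm : {rmorphism R -> S}).
Lemma mkRME (R S : comPzRingType) (f : R -> S) Ha Hm x : @mkRM R S f Ha Hm x = f x.
Proof. by []. Qed.

Lemma rmorph_eq (R S : comPzRingType) (f g : {rmorphism R -> S}) : f =1 g -> f = g.
Proof.
case: f => f [[fa] [fm]]; case: g => g [[ga] [gm]] /= H.
have E : f = g by apply: functional_extensionality.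
subst g.
have -> : fa = ga by apply: proof_irrelevance.
by have -> : fm = gm by apply: proof_irrelevance.
Qed.

Lemma rmorph_inv (R S : comPzRingType) (f : {rmorphism R -> S}) (g : S -> R) :
  cancel f g -> cancel g f ->
  exists h : {rmorphism S -> R}, forall x, h x = g x.
Proof.
move=> fg gf.
have Ha : zmod_morphism g by move=> x y; apply: (can_inj fg); rewrite rmorphB !gf.
have Hm : monoid_morphism g.
  split; first by apply: (can_inj fg); rewrite rmorph1 gf.
  by move=> x y; apply: (can_inj fg); rewrite rmorphM !gf.
by exists (mkRM Ha Hm).
Qed.

Lemma ringstr_ext (S : Type) (r r' : ringstr S) :
  r0 r = r0 r' -> r1 r = r1 r' -> radd r =2 radd r' -> ropp r =1 ropp r' ->
  rmul r =2 rmul r' -> r = r'.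
Proof.
case: r => a b c d e ? ? ? ? ? ? ? ?; case: r' => a' b' c' d' e' ? ? ? ? ? ? ? ? /= ?? Hc Hd He.
subst a' b'.
have ? : c = c' by apply: functional_extensionality => x; apply: functional_extensionality => y; apply: Hc.
have ? : d = d' by apply: functional_extensionality.
have ? : e = e' by apply: functional_extensionality => x; apply: functional_extensionality => y; apply: He.
subst; f_equal; apply: proof_irrelevance.
Qed.

Section Rring.
Variables (S : finType) (r : ringstr S).
Lemma rringD (x y : rring r) : x + y = radd r x y. Proof. by []. Qed.
Lemma rringN (x : rring r) : - x = ropp r x. Proof. by []. Qed.
Lemma rringM (x y : rring r) : x * y = rmul r x y. Proof. by []. Qed.
Lemma rring0 : (0 : rring r) = r0 r. Proof. by []. Qed.
Lemma rring1 : (1 : rring r) = r1 r. Proof. by []. Qed.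
End Rring.

Section Transport.
Variables (A : finType) (K : comPzRingType) (e : A -> K) (d : K -> A).
Hypotheses (ed : cancel e d) (de : cancel d e).

Definition trs : ringstr A.
refine (@RingStr A (d 0) (d 1) (fun a b => d (e a + e b)) (fun a => d (- e a))
   (fun a b => d (e a * e b)) _ _ _ _ _ _ _ _).
- by move=> a b c; rewrite !de addrA.
- by move=> a b; rewrite addrC.
- by move=> a; rewrite !de add0r ed.
- by move=> a; rewrite !de addNr.
- by move=> a b c; rewrite !de mulrA.
- by move=> a b; rewrite mulrC.
- by move=> a; rewrite !de mul1r ed.
- by move=> a b c; rewrite !de mulrDl.
Defined.

Lemma trs_e_ex : exists f : {rmorphism rring trs -> K}, forall x, f x = e x.
Proof.
have Ha : zmod_morphism (e : rring trs -> K).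
  by move=> x y; rewrite rringD rringN /= !de.
have Hm : monoid_morphism (e : rring trs -> K).
  by split; [rewrite rring1 /= de | move=> x y; rewrite rringM /= de].
by exists (mkRM Ha Hm).
Qed.

Lemma trs_d_ex : exists f : {rmorphism K -> rring trs}, forall x, f x = d x.
Proof.
have [f fE] := trs_e_ex.
have c1 : cancel f d by move=> x; rewrite fE ed.
have c2 : cancel d f by move=> x; rewrite fE de.
have [g gE] := @rmorph_inv _ _ f d c1 c2.
by exists g.
Qed.
End Transport.

Section DProdRing.
Variables (n : nat) (L : 'I_n -> comPzRingType).
Definition dpr := {dffun forall i, L i}.
HB.instance Definition _ := Choice.on dpr.
Definition dpr0 : dpr := [ffun i => 0].
Definition dpr1 : dpr := [ffun i => 1].
Definition dpradd (f g : dpr) : dpr := [ffun i => f i + g i].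
Definition dpropp (f : dpr) : dpr := [ffun i => - f i].
Definition dprmul (f g : dpr) : dpr := [ffun i => f i * g i].
Fact dpraddA : associative dpradd.
Proof. by move=> f g h; apply/ffunP => i; rewrite !ffunE addrA. Qed.
Fact dpraddC : commutative dpradd.
Proof. by move=> f g; apply/ffunP => i; rewrite !ffunE addrC. Qed.
Fact dpradd0 : left_id dpr0 dpradd.
Proof. by move=> f; apply/ffunP => i; rewrite !ffunE add0r. Qed.
Fact dpraddN : left_inverse dpr0 dpropp dpradd.
Proof. by move=> f; apply/ffunP => i; rewrite !ffunE addNr. Qed.
HB.instance Definition _ := GRing.isZmodule.Build dpr dpraddA dpraddC dpradd0 dpraddN.
Fact dprmulA : associative dprmul.
Proof. by move=> f g h; apply/ffunP => i; rewrite !ffunE mulrA. Qed.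
Fact dprmulC : commutative dprmul.
Proof. by move=> f g; apply/ffunP => i; rewrite !ffunE mulrC. Qed.
Fact dprmul1 : left_id dpr1 dprmul.
Proof. by move=> f; apply/ffunP => i; rewrite !ffunE mul1r. Qed.
Fact dprmulD : left_distributive dprmul dpradd.
Proof. by move=> f g h; apply/ffunP => i; rewrite !ffunE mulrDl. Qed.
HB.instance Definition _ := GRing.Zmodule_isComPzRing.Build dpr dprmulA dprmulC dprmul1 dprmulD.

Lemma dprD (f g : dpr) i : (f + g) i = f i + g i. Proof. by rewrite ffunE. Qed.
Lemma dprN (f : dpr) i : (- f) i = - f i. Proof. by rewrite ffunE. Qed.
Lemma dprM (f g : dpr) i : (f * g) i = f i * g i. Proof. by rewrite ffunE. Qed.
Lemma dpr1E i : (1 : dpr) i = 1. Proof. by rewrite ffunE. Qed.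
Lemma dpr0E i : (0 : dpr) i = 0. Proof. by rewrite ffunE. Qed.

Lemma proj_ex i : exists f : {rmorphism dpr -> L i}, forall x, f x = x i.
Proof.
have Ha : zmod_morphism (fun x : dpr => x i) by move=> x y; rewrite dprD dprN.
have Hm : monoid_morphism (fun x : dpr => x i).
  by split; [rewrite dpr1E | move=> x y; rewrite dprM].
by exists (mkRM Ha Hm).
Qed.
End DProdRing.

Section FieldAlias.
Variables (p : nat) (S : finType) (r : ringstr S) (h : is_field_charp p (rring r)).
Definition frr_ (hh : is_field_charp p (rring r)) : Type := rring r.
Notation frr := (frr_ h).
HB.instance Definition _ := Finite.on frr.
HB.instance Definition _ := GRing.ComPzRing.on frr.
Fact frr_nz : (1 : frr) != 0. Proof. by case: h. Qed.
HB.instance Definition _ := GRing.PzSemiRing_isNonZero.Build frr frr_nz.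
Definition frr_inv (x : frr) : frr := if [pick y | x * y == 1] is Some y then y else 0.
Fact frr_mulVf (x : frr) : x != 0 -> frr_inv x * x = 1.
Proof.
move=> nz; rewrite /frr_inv; case: pickP => [y /eqP <-|H]; first by rewrite mulrC.
case: h => _ /(_ x nz) [y hy] _; by move: (H y); rewrite hy eqxx.
Qed.
Fact frr_inv0 : frr_inv 0 = 0.
Proof.
rewrite /frr_inv; case: pickP => [y|//]; rewrite mul0r eq_sym => /eqP E.
by move: frr_nz; rewrite E eqxx.
Qed.
HB.instance Definition _ := GRing.ComNzRing_isField.Build frr frr_mulVf frr_inv0.
End FieldAlias.

Section DProj.
Variables (n : nat) (L : 'I_n -> comPzRingType) (i : 'I_n).
Fact dproj_a : zmod_morphism (fun x : dpr L => x i).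
Proof. by move=> x y; rewrite dprD dprN. Qed.
Fact dproj_m : monoid_morphism (fun x : dpr L => x i).
Proof. by split; [rewrite dpr1E | move=> x y; rewrite dprM]. Qed.
Definition dproj : {rmorphism dpr L -> L i} := mkRM dproj_a dproj_m.
Lemma dprojE x : dproj x = x i. Proof. by []. Qed.
End DProj.

Definition single (n : nat) (L : 'I_n -> comPzRingType) (i : 'I_n) (w : L i) : forall k, L k :=
  fun k => if (i =P k) is ReflectT E then eq_rect i L w k E else 0.
Lemma single_id n L i w : @single n L i w i = w.
Proof. by rewrite /single; case: eqP => [E|//]; rewrite (eq_axiomK E). Qed.
Lemma single_ne n L i w k : i != k -> @single n L i w k = 0.
Proof. by rewrite /single; case: eqP. Qed.

Definition fieldish (K : comPzRingType) : Prop :=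
  (1 != 0 :> K) /\ forall y : K, y != 0 -> exists w, y * w = 1.

Lemma fieldish_of p (K : comPzRingType) : is_field_charp p K -> fieldish K.
Proof. by case. Qed.

Lemma ff_field p (K : finFieldType) : p \in [pchar K] -> is_field_charp p K.
Proof.
case/andP=> _ /eqP hp; split => //; first exact: oner_neq0.
by move=> y nz; exists y^-1; rewrite mulfV.
Qed.

Lemma field_transfer p (A B : comPzRingType) (f : {rmorphism A -> B}) (g : B -> A) :
  cancel f g -> cancel g f -> is_field_charp p B -> is_field_charp p A.
Proof.
move=> fg gf [h1 h2 h3]; split.
- by apply: contra h1 => /eqP E; rewrite -(rmorph1 f) E rmorph0.
- move=> y nz; have : f y != 0 by apply: contra nz => /eqP E; rewrite -(fg y) E -(rmorph0 f) fg.
  case/h2 => w hw; exists (g w); apply: (can_inj fg); by rewrite rmorphM gf hw rmorph1.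
- by apply: (can_inj fg); rewrite rmorph_nat h3 rmorph0.
Qed.

Section Decomp.
Variables (R : comPzRingType) (n : nat) (L : 'I_n -> comPzRingType)
  (q : forall i, {rmorphism R -> L i}).
Hypotheses (Lf : forall i, fieldish (L i))
  (qinj : forall x y, (forall i, q i x = q i y) -> x = y)
  (qsurj : forall y : (forall i, L i), exists x, forall i, q i x = y i)
  (qsurj1 : forall i (w : L i), exists x, q i x = w).

Lemma idem_ex : exists e : 'I_n -> R, forall i k, q k (e i) = if k == i then 1 else 0.
Proof.
apply: (@fchoice _ _ (fun i e => forall k, q k e = if k == i then 1 else 0)) => i.
by have [x hx] := qsurj (fun k => if k == i then 1 else 0); exists x.
Qed.

Lemma decomp_match (K : comPzRingType) (Kf : fieldish K) (psi : {rmorphism R -> K}) :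
  exists i, forall x, psi x = 0 <-> q i x = 0.
Proof.
have [e he] := idem_ex.
have sum1 : \sum_i e i = 1.
  apply: qinj => k; rewrite rmorph_sum rmorph1 (bigD1 k) //= he eqxx big1 ?addr0 //.
  by move=> j; rewrite he eq_sym => /negbTE ->.
have [i nzi] : exists i, psi (e i) != 0.
  case: (boolP [exists i, psi (e i) != 0]) => [/existsP //|/existsPn H].
  case: Kf => K1 _; move: K1; rewrite -(rmorph1 psi) -sum1 rmorph_sum big1 ?eqxx //.
  by move=> j _; apply/eqP; move: (H j); rewrite negbK.
have ee : e i * e i = e i.
  by apply: qinj => k; rewrite rmorphM he; case: (k == i); rewrite ?mulr1 ?mulr0.
have pe1 : psi (e i) = 1.
  case: Kf => _ /(_ _ nzi) [w hw].
  by rewrite -hw -{2}ee rmorphM -mulrA hw mulr1.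
exists i => x; split => [px|qx].
- apply/eqP; apply: contraT => nq.
  case: (Lf i) => _ /(_ _ nq) [w hw].
  have [y hy] := qsurj1 w.
  have u : x * y * e i = e i.
    apply: qinj => k; rewrite !rmorphM he; case: eqP => [->|]; last by rewrite !mulr0.
    by rewrite hy hw mulr1.
  by move: pe1; rewrite -u !rmorphM px !mul0r => /eqP; rewrite eq_sym; case: Kf => /negbTE -> _.
- have : x * e i = 0.
    apply: qinj => k; rewrite rmorphM he rmorph0; case: eqP => [->|]; last by rewrite mulr0.
    by rewrite qx mul0r.
  by move/(congr1 psi); rewrite rmorphM pe1 mulr1 rmorph0.
Qed.

Lemma decomp_distinct i i' : (forall x, q i x = 0 <-> q i' x = 0) -> i = i'.
Proof.
move=> H; have [e he] := idem_ex; apply/eqP; apply/negP => /negP ne.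
have : q i (e i') = 0 by rewrite he (negbTE ne).
move/H; rewrite he eqxx => /eqP; case: (Lf i') => /negbTE -> _ //.
Qed.
End Decomp.

Section Decomp2.
Variables (R : comPzRingType) (n m : nat) (L : 'I_n -> comPzRingType)
  (q : forall i, {rmorphism R -> L i}) (L' : 'I_m -> comPzRingType)
  (q' : forall i, {rmorphism R -> L' i}).
Hypotheses (Lf : forall i, fieldish (L i))
  (qinj : forall x y, (forall i, q i x = q i y) -> x = y)
  (qsurj : forall y : (forall i, L i), exists x, forall i, q i x = y i)
  (qsurj1 : forall i (w : L i), exists x, q i x = w).
Hypotheses (Lf' : forall i, fieldish (L' i))
  (qinj' : forall x y, (forall i, q' i x = q' i y) -> x = y)
  (qsurj' : forall y : (forall i, L' i), exists x, forall i, q' i x = y i)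
  (qsurj1' : forall i (w : L' i), exists x, q' i x = w).

Lemma decomp_sigma : exists sg : 'I_m -> 'I_n, injective sg /\
  forall j x, q' j x = 0 <-> q (sg j) x = 0.
Proof.
have [sg hsg] := @fchoice _ _ (fun j i => forall x, q' j x = 0 <-> q i x = 0)
  (fun j => decomp_match Lf qinj qsurj qsurj1 (Lf' j) (q' j)).
exists sg; split => // j j' E.
apply: (decomp_distinct Lf' qsurj') => x; split => H.
- apply/(hsg j' x); rewrite -E; exact/(hsg j x).
- apply/(hsg j x); rewrite E; exact/(hsg j' x).
Qed.
End Decomp2.

Lemma Fmap_ext (X : CRingFunctor) (R S : comPzRingType) (f g : {rmorphism R -> S}) :
  f =1 g -> forall x : X R, Fmap f x = Fmap g x.
Proof. by move=> /rmorph_eq ->. Qed.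

Lemma FmapC (X : CRingFunctor) (R S T : comPzRingType) (f : {rmorphism R -> S})
  (g : {rmorphism S -> T}) (h : {rmorphism R -> T}) :
  (forall x, h x = g (f x)) -> forall x : X R, Fmap h x = Fmap g (Fmap f x).
Proof.
move=> H x; rewrite -Fmap_comp; congr Fmap; apply: rmorph_eq => y /=; exact: H.
Qed.

Lemma FmapI (X : CRingFunctor) (R : comPzRingType) (h : {rmorphism R -> R}) :
  (forall x, h x = x) -> forall x : X R, Fmap h x = x.
Proof.
move=> H x; rewrite -[RHS](Fmap_id (c:=X)); congr Fmap; exact: rmorph_eq.
Qed.

Lemma surj1_of (R : comPzRingType) (n : nat) (L : 'I_n -> comPzRingType)
  (q : forall i, {rmorphism R -> L i}) :
  (forall y : (forall i, L i), exists x, forall i, q i x = y i) ->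
  forall i (w : L i), exists x, q i x = w.
Proof.
move=> qs i w; have [x hx] := qs (single w); exists x; by rewrite hx single_id.
Qed.

Lemma prod_pres (X : CRingFunctor) (hX : preserves_products X) (n : nat) :
  forall (P : comPzRingType) (L : 'I_n -> comPzRingType) (q : forall i, {rmorphism P -> L i}),
  (forall x y, (forall i, q i x = q i y) -> x = y) ->
  (forall y : (forall i, L i), exists x, forall i, q i x = y i) ->
  (forall y : (forall i, X (L i)), exists x, forall i, Fmap (q i) x = y i) /\
  (forall x x' : X P, (forall i, Fmap (q i) x = Fmap (q i) x') -> x = x').
Proof.
case: hX => hT hB; elim: n => [|n IH] P L q qinj qsurj.
  have E : (1 = 0 :> P) by apply: qinj => -[].
  have [pt hpt] := hT P E.
  by split => [y|x x' _]; [exists pt => -[] | rewrite (hpt x) (hpt x')].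
pose L' := fun j : 'I_n => L (lift ord0 j).
pose rf := fun x : P => [ffun j => q (lift ord0 j) x] : dpr L'.
have ra : zmod_morphism rf.
  by move=> x y; apply/ffunP => j; rewrite dprD dprN !ffunE rmorphB.
have rm : monoid_morphism rf.
  split; first by apply/ffunP => j; rewrite dpr1E ffunE rmorph1.
  by move=> x y; apply/ffunP => j; rewrite dprM !ffunE rmorphM.
pose r : {rmorphism P -> dpr L'} := mkRM ra rm.
have qs1 := surj1_of qsurj.
have [e he] := idem_ex qsurj.
have binj : injective (fun x => (q ord0 x, r x)).
  move=> x y [E0 E1]; apply: qinj => k.
  case: (unliftP ord0 k) => [j ->|->] //.
  by move/ffunP: E1 => /(_ j); rewrite /= !ffunE.
have bsurj : forall ab : L ord0 * dpr L', exists x, (q ord0 x, r x) = ab.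
  case=> a b.
  have [x0 hx0] := qs1 ord0 a.
  have [xs hxs] := @fchoice _ _ (fun j x => q (lift ord0 j) x = b j) (fun j => qs1 _ (b j)).
  exists (x0 * e ord0 + \sum_j xs j * e (lift ord0 j)).
  congr pair.
    rewrite rmorphD rmorphM he eqxx mulr1 hx0 rmorph_sum big1 ?addr0 // => j _.
    by rewrite rmorphM he (negbTE (neq_lift _ _)) mulr0.
  apply/ffunP => j; rewrite /= ffunE rmorphD rmorphM he eq_sym (negbTE (neq_lift _ _)) mulr0 add0r.
  rewrite rmorph_sum (bigD1 j) //= rmorphM he eqxx mulr1 hxs big1 ?addr0 // => k nkj.
  by rewrite rmorphM he (inj_eq (@lift_inj _ _)) eq_sym (negbTE nkj) mulr0.
have [binv hbinv] := @fchoice _ _ (fun ab x => (q ord0 x, r x) = ab) bsurj.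
have bbij : bijective (fun x => (q ord0 x, r x)).
  by exists binv => [x|ab]; [apply: binj; rewrite hbinv | rewrite hbinv].
have Xbij := hB _ _ _ (q ord0) r bbij.
have pinj : forall x y : dpr L', (forall j, dproj L' j x = dproj L' j y) -> x = y.
  by move=> x y H; apply/ffunP => j; exact: H.
have psurj : forall y : (forall j, L' j), exists x : dpr L', forall j, dproj L' j x = y j.
  by move=> y; exists [ffun j => y j] => j; rewrite dprojE ffunE.
have [IHs IHi] := IH _ _ (dproj L') pinj psurj.
have comp : forall j (x : X P), Fmap (q (lift ord0 j)) x = Fmap (dproj L' j) (Fmap r x).
  by move=> j; apply: FmapC => x; rewrite dprojE /= ffunE.
split.
  move=> y; have [xq hxq] := IHs (fun j => y (lift ord0 j)).
  case: Xbij => g _ gK.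
  exists (g (y ord0, xq)) => k.
  have E := gK (y ord0, xq).
  have /= E0 := congr1 fst E; have /= E1 := congr1 snd E.
  case: (unliftP ord0 k) => [j ->|->] //.
  by rewrite comp E1 hxq.
move=> x x' H; apply: (bij_inj Xbij); congr pair; first exact: H.
by apply: IHi => j; rewrite -!comp; apply: H.
Qed.

Section Blocks.
Variables (S : finType) (P : {set {set S}}) (hP : partition P [set: S]).

Lemma blk_uniq (B1 B2 : blocks P) s : s \in val B1 -> s \in val B2 -> B1 = B2.
Proof.
move=> s1 s2; apply: val_inj; apply/eqP; apply: contraT => ne.
case/and3P: hP => _ /trivIsetP tP _.
by move: (disjointFr (tP _ _ (valP B1) (valP B2) ne) s1); rewrite s2.
Qed.

Lemma blk_ex s : exists B : blocks P, s \in val B.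
Proof.
case/and3P: hP => /eqP hc _ _.
have : s \in cover P by rewrite hc inE.
by case/bigcupP => B BP sB; exists (exist _ B BP).
Qed.

Lemma blk_ne (B : blocks P) : exists s, s \in val B.
Proof.
case/and3P: hP => _ _ n0; apply/set0Pn; apply: contra n0 => /eqP E.
by rewrite -E (valP B).
Qed.
End Blocks.

Section Species.
Variables (X : CRingFunctor) (p : nat) (S : finType).

Definition Cz (z : Zstr X p S) (P : {set {set S}}) (f : Fstr X p (blocks P)) : Prop :=
  exists h : {rmorphism rring (z_ring z) -> rring (f_ring f)},
    (forall s, s \in val (h s : blocks P)) /\ Fmap h (z_pt z) = f_pt f.

Definition Corr (z : Zstr X p S) n (x : dprodn (Fstr X p) n S) : Prop :=
  forall i, @Cz z (dp_part x i) (dp_str x i).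

Lemma fiber_ex (z : Zstr X p S) (K : finFieldType) (hK : p \in [pchar K])
  (psi : {rmorphism rring (z_ring z) -> K}) (psurj : forall k, exists s, psi s = k) :
  exists PF : {P : {set {set S}} & Fstr X p (blocks P)},
    [/\ partition (projT1 PF) [set: S],
        (forall B, B \in projT1 PF -> forall s t, s \in B -> (t \in B <-> psi t = psi s))
      & Cz z (projT2 PF)].
Proof.
pose fib (s : S) : {set S} := [set t : S | psi t == psi s].
pose P : {set {set S}} := [set fib s | s in [set: S]].
have fibP s : fib s \in P.
  by apply: imset_f; rewrite ?inE.
have hP : partition P [set: S].
  apply/and3P; split.
  - apply/eqP/setP => s; rewrite inE; apply/bigcupP; exists (fib s) => //.
    by rewrite inE.
  - apply/trivIsetP => A B /imsetP[a _ ->] /imsetP[b _ ->] ne.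
    rewrite -setI_eq0; apply/eqP/setP => t; rewrite !inE; apply/negP => /andP[/eqP ta /eqP tb].
    by move/negP: ne; apply; apply/eqP/setP => u; rewrite !inE -ta -tb.
  - apply/negP => /imsetP[s _ E].
    by move/setP: E => /(_ s); rewrite !inE eqxx.
have hker : forall B, B \in P -> forall s t, s \in B -> (t \in B <-> psi t = psi s).
  move=> B /imsetP[s0 _ ->] s t; rewrite !inE => /eqP hs; rewrite hs.
  by split => /eqP.
have [sg hsg] := @fchoice K S (fun k s => psi s = k) psurj.
pose d (k : K) : blocks P := exist _ (fib (sg k)) (fibP _).
have [rho hrho] := @fchoice (blocks P) S (fun B s => s \in val B) (blk_ne hP).
pose e (B : blocks P) : K := psi (rho B).
have de : cancel d e.
  by move=> k; rewrite /e; move: (hrho (d k)); rewrite /= inE => /eqP ->; exact: hsg.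
have ed : cancel e d.
  move=> B; apply: val_inj => /=; have := valP B; case/imsetP => s0 _ E.
  rewrite E; apply/setP => t; have := hrho B; rewrite E inE => /eqP hr.
  by rewrite !inE /e hr hsg.
pose r := trs ed de.
have [eR eRE] := trs_e_ex ed de.
have [dR dRE] := trs_d_ex ed de.
have c1 : cancel eR d by move=> x; rewrite eRE ed.
have c2 : cancel d eR by move=> x; rewrite eRE de.
have hf : is_field_charp p (rring r) := field_transfer c1 c2 (ff_field hK).
pose h := (dR \o psi : {rmorphism _ -> _}).
exists (existT _ P (FStr hf (Fmap h (z_pt z)))); split => //=.
exists h; split => // s.
rewrite /= dRE /d /=.
have : (s : S) \in fib (sg (psi s)) by rewrite /fib inE hsg.
exact.
Qed.
End Species.
Arguments Cz {X p S} z P f.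

Section CorrEx.
Variables (X : CRingFunctor) (p : nat) (S : finType).

Lemma corr_ex (z : Zstr X p S) : exists n (x : dprodn (Fstr X p) n S), Corr z x.
Proof.
have [n [K [phi [hch inj surj]]]] := z_prod z.
have ps : forall i (k : K i), exists s, phi i s = k.
  exact: (@surj1_of _ n (fun i => (K i : comPzRingType)) phi surj).
have [PF hPF] := dchoice (fun i => fiber_ex (hch i) (ps i)).
pose P i := projT1 (PF i).
have hP : forall i, partition (P i) [set: S] by move=> i; case: (hPF i).
have hk : forall i B, B \in P i -> forall s t, s \in B -> (t \in B <-> phi i t = phi i s).
  by move=> i; case: (hPF i).
have hc : forall B : (forall i, blocks (P i)), #|\bigcap_(i < n) val (B i)| = 1%N.
  move=> B.
  have [sB hsB] := @fchoice _ S (fun i s => s \in val (B i)) (fun i => blk_ne (hP i) (B i)).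
  have [x hx] := surj (fun i => phi i (sB i)).
  apply/eqP/cards1P; exists x; apply/setP => t; rewrite inE.
  apply/bigcapP/eqP => [H|->] .
    apply: inj => i; rewrite hx; apply/(hk i _ (valP (B i)) _ _ (hsB i)); exact: H.
  move=> i _; apply/(hk i _ (valP (B i)) _ _ (hsB i)); exact: hx.
exists n, (@DProd (Fstr X p) n S P hP hc (fun i => projT2 (PF i))).
by move=> i; case: (hPF i).
Qed.
End CorrEx.

Lemma cart_props (F : finType -> Type) (n : nat) (S : finType) (x : dprodn F n S)
  (h : forall i, S -> blocks (dp_part x i)) (hh : forall i s, s \in val (h i s)) :
  (forall s t, (forall i, h i s = h i t) -> s = t) /\
  (forall B : (forall i, blocks (dp_part x i)), exists s, forall i, h i s = B i).
Proof.
split.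
  move=> s t E; have := @dp_cart _ _ _ x (fun i => h i s).
  move/eqP/cards1P => [u hu].
  have su : s \in \bigcap_(i < n) val (h i s) by apply/bigcapP => i _.
  have tu : t \in \bigcap_(i < n) val (h i s) by apply/bigcapP => i _; rewrite E.
  by move: su tu; rewrite hu !inE => /eqP -> /eqP ->.
move=> B; have := @dp_cart _ _ _ x B; move/eqP/cards1P => [u hu].
have : u \in \bigcap_(i < n) val (B i) by rewrite hu inE.
move/bigcapP => Hu; exists u => i.
exact: (blk_uniq (dp_partition x i) (hh i u) (Hu i isT)).
Qed.

Section Uniq.
Variables (X : CRingFunctor) (p : nat) (S : finType).

Lemma blk_memE (P : {set {set S}}) (hP : partition P [set: S]) (zr : ringstr S)
  (r : ringstr (blocks P)) (h : {rmorphism rring zr -> rring r}) (hb : forall s, s \in val (h s : blocks P))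
  (s t : S) : t \in val (h s : blocks P) <-> h t = h s.
Proof.
split => [H|<-//]; exact: (blk_uniq hP (hb t) H).
Qed.

Lemma part_eq (P Q : {set {set S}}) (hP : partition P [set: S]) (hQ : partition Q [set: S])
  (hp : S -> blocks P) (hq : S -> blocks Q) (bp : forall s, s \in val (hp s))
  (bq : forall s, s \in val (hq s)) (E : forall s, val (hp s) = val (hq s)) : P = Q.
Proof.
have key : forall (P Q : {set {set S}}) (hP : partition P [set: S]) (hp : S -> blocks P)
   (hq : S -> blocks Q) (bp : forall s, s \in val (hp s)) (E : forall s, val (hp s) = val (hq s)),
   P \subset Q.
  move=> P0 Q0 hP0 hp0 hq0 bp0 E0; apply/subsetP => B BP.
  have [s sB] := blk_ne hP0 (exist _ B BP).
  have -> : B = val (hp0 s) by rewrite (blk_uniq hP0 (bp0 s) sB).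
  by rewrite E0 (valP (hq0 s)).
apply/eqP; rewrite eqEsubset (key _ _ hP hp hq bp E) (key _ _ hQ hq hp bq) // => s; by rewrite E.
Qed.

Lemma Cz_uniq (z : Zstr X p S) (P : {set {set S}}) (hP : partition P [set: S])
  (f1 f2 : Fstr X p (blocks P)) : Cz z P f1 -> Cz z P f2 -> f1 = f2.
Proof.
case: f1 => r1 fd1 pt1; case: f2 => r2 fd2 pt2 [h1 [b1 e1]] [h2 [b2 e2]] /=.
simpl in *.
have hh : forall s, (h1 s : blocks P) = (h2 s : blocks P).
  by move=> s; apply: (blk_uniq hP (b1 s) (b2 s)).
have hs : forall B : blocks P, exists s, (h1 s : blocks P) = B.
  move=> B; have [s sB] := blk_ne hP B; exists s; exact: (blk_uniq hP (b1 s) sB).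
have E : r1 = r2.
  apply: ringstr_ext.
  - by have := rmorph0 h1; rewrite hh rmorph0.
  - by have := rmorph1 h1; rewrite hh rmorph1.
  - move=> B C; have [s <-] := hs B; have [t <-] := hs C.
    transitivity (h1 (s + t) : blocks P); first by rewrite rmorphD.
    by rewrite hh rmorphD -!hh.
  - move=> B; have [s <-] := hs B.
    transitivity (h1 (- s) : blocks P); first by rewrite rmorphN.
    by rewrite hh rmorphN -!hh.
  - move=> B C; have [s <-] := hs B; have [t <-] := hs C.
    transitivity (h1 (s * t) : blocks P); first by rewrite rmorphM.
    by rewrite hh rmorphM -!hh.
subst r2; have -> : fd1 = fd2 by apply: proof_irrelevance.
rewrite -e1 -e2; f_equal; exact: (@Fmap_ext X _ _ h1 h2 hh).
Qed.
End Uniq.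

Section Orbit.
Variables (F : finType -> Type) (n : nat) (S : finType).
Definition FamT := {pa : 'I_n -> {set {set S}} & forall i, F (blocks (pa i))}.
Definition reidx (t : 'I_n -> 'I_n) (w : FamT) : FamT :=
  existT _ (fun i => projT1 w (t i)) (fun i => projT2 w (t i)).
Lemma reidx_ext a b w : a =1 b -> reidx a w = reidx b w.
Proof. by move=> /functional_extensionality E; rewrite E. Qed.
Definition famof (x : dprodn F n S) : FamT := existT _ (dp_part x) (dp_str x).
Lemma orbitE (x y : dprodn F n S) : dp_orbit x y <-> exists s : 'S_n, famof y = reidx s (famof x).
Proof. by []. Qed.

Lemma dorbit_refl (x : dprodn F n S) : dp_orbit x x.
Proof. by apply/orbitE; exists 1%g; rewrite (@reidx_ext _ id (famof x) (fun i => perm1 i)). Qed.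

Lemma dorbit_sym (x y : dprodn F n S) : dp_orbit x y -> dp_orbit y x.
Proof.
move/orbitE => [s E]; apply/orbitE; exists (s^-1)%g.
rewrite E; transitivity (reidx (fun i => s ((s^-1)%g i)) (famof x)); last by [].
by rewrite (@reidx_ext (fun i => s ((s^-1)%g i)) id (famof x) (permKV s)).
Qed.

Lemma dorbit_trans (x y w : dprodn F n S) : dp_orbit x y -> dp_orbit y w -> dp_orbit x w.
Proof.
move/orbitE => [s E1] /orbitE [t E2]; apply/orbitE; exists (t * s)%g.
rewrite E2 E1; transitivity (reidx (fun i => s (t i)) (famof x)); first by [].
by rewrite (@reidx_ext _ _ (famof x) (fun i => esym (permM t s i))).
Qed.
End Orbit.

Section CorrUniq.
Variables (X : CRingFunctor) (p : nat) (S : finType).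
Local Notation F := (Fstr X p).

Lemma corr_orbit_inv (z : Zstr X p S) n (x y : dprodn F n S) :
  Corr z x -> dp_orbit x y -> Corr z y.
Proof.
move=> Cx /orbitE [s E].
pose G (w : FamT F n S) := forall i, Cz z (projT1 w i) (projT2 w i).
have : G (famof y) by rewrite E => i; exact: Cx.
by [].
Qed.

Lemma corr_fam (z : Zstr X p S) n (x : dprodn F n S) : Corr z x ->
  exists h : (forall i, {rmorphism rring (z_ring z) -> rring (f_ring (dp_str x i))}),
    forall i, (forall s, s \in val (h i s : blocks _)) /\ Fmap (h i) (z_pt z) = f_pt (dp_str x i).
Proof.
move=> C.
exact: (@dchoice _ (fun i => {rmorphism rring (z_ring z) -> rring (f_ring (dp_str x i))})
  (fun i h => (forall s, s \in val (h s : blocks _)) /\ Fmap h (z_pt z) = f_pt (dp_str x i)) C).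
Qed.

Lemma corr_decomp (z : Zstr X p S) n (x : dprodn F n S)
  (h : forall i, {rmorphism rring (z_ring z) -> rring (f_ring (dp_str x i))})
  (hb : forall i s, s \in val (h i s : blocks _)) :
  [/\ forall i, fieldish (rring (f_ring (dp_str x i))),
      forall s t, (forall i, h i s = h i t) -> s = t,
      forall y : (forall i, rring (f_ring (dp_str x i))), exists s, forall i, h i s = y i
    & forall i (w : rring (f_ring (dp_str x i))), exists s, h i s = w].
Proof.
have [ci cs] := @cart_props F n S x (fun i s => h i s) hb.
split.
- by move=> i; apply: fieldish_of (f_field (dp_str x i)).
- exact: ci.
- exact: cs.
- move=> i w; have [s sw] := blk_ne (dp_partition x i) w; exists s.
  exact: (blk_uniq (dp_partition x i) (hb i s) sw).
Qed.

Lemma corr_sigma (z : Zstr X p S) n m (x : dprodn F n S) (y : dprodn F m S) :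
  Corr z x -> Corr z y -> exists sg : 'I_m -> 'I_n, injective sg /\
    forall j, dp_part y j = dp_part x (sg j).
Proof.
move=> /corr_fam [hx hhx] /corr_fam [hy hhy].
have hbx : forall i s, s \in val (hx i s : blocks _) by move=> i; case: (hhx i).
have hby : forall i s, s \in val (hy i s : blocks _) by move=> i; case: (hhy i).
have [Lf qi qs qs1] := corr_decomp hbx.
have [Lf' qi' qs' qs1'] := corr_decomp hby.
have [sg [sgi hsg]] := decomp_sigma Lf qi qs qs1 Lf' qs'.
exists sg; split => // j.
apply: (part_eq (dp_partition y j) (dp_partition x (sg j)) (hby j) (hbx (sg j))) => s.
apply/setP => t; apply/idP/idP.
- move/(blk_memE (dp_partition y j) (hby j)) => E.
  apply/(blk_memE (dp_partition x (sg j)) (hbx (sg j))).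
  apply/eqP; rewrite -subr_eq0 -rmorphB; apply/eqP/hsg.
  by rewrite rmorphB E subrr.
- move/(blk_memE (dp_partition x (sg j)) (hbx (sg j))) => E.
  apply/(blk_memE (dp_partition y j) (hby j)).
  apply/eqP; rewrite -subr_eq0 -rmorphB; apply/eqP/hsg.
  by rewrite rmorphB E subrr.
Qed.

Lemma corr_n (z : Zstr X p S) n m (x : dprodn F n S) (y : dprodn F m S) :
  Corr z x -> Corr z y -> n = m.
Proof.
move=> Cx Cy; have [sg [sgi _]] := corr_sigma Cx Cy.
have [tg [tgi _]] := corr_sigma Cy Cx.
have := leq_card _ sgi; have := leq_card _ tgi; rewrite !card_ord => a b.
by apply/eqP; rewrite eqn_leq a b.
Qed.

Lemma corr_orbit (z : Zstr X p S) n (x y : dprodn F n S) :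
  Corr z x -> Corr z y -> dp_orbit x y.
Proof.
move=> Cx Cy; have [sg [sgi hsg]] := corr_sigma Cx Cy.
exists (perm sgi).
move: Cy hsg; case: y => py hpy cy sy /= Cy hsg.
have E : py = (fun j => dp_part x (perm sgi j)).
  by apply: functional_extensionality => j; rewrite permE hsg.
subst py; f_equal; apply: functional_extensionality_dep => j.
apply: (Cz_uniq (dp_partition x (perm sgi j))); [exact: (Cy j) | exact: (Cx (perm sgi j))].
Qed.
End CorrUniq.

Section Surj.
Variables (X : CRingFunctor) (hX : preserves_products X) (p : nat) (hp : prime p) (S : finType).
Local Notation F := (Fstr X p).

Lemma corr_surj n (x : dprodn F n S) : exists z : Zstr X p S, Corr z x.
Proof.
pose L i := rring (f_ring (dp_str x i)).
have [h0 hh0] := @dchoice _ (fun i => S -> blocks (dp_part x i))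
   (fun i f => forall s, s \in val (f s))
   (fun i => @fchoice S (blocks (dp_part x i)) (fun s B => s \in val B) (blk_ex (dp_partition x i))).
have [ci cs] := @cart_props F n S x h0 hh0.
pose Phi (s : S) : dpr L := [ffun i => h0 i s].
have [Psi hPsi] := @fchoice (dpr L) S (fun y s => forall i, h0 i s = y i) (fun y => cs (fun i => y i)).
have de : cancel Psi Phi by move=> y; apply/ffunP => i; rewrite ffunE hPsi.
have ed : cancel Phi Psi by move=> s; apply: ci => i; rewrite hPsi ffunE.
pose zr := trs ed de.
have [eR eRE] := trs_e_ex ed de.
pose q i := (dproj L i \o eR : {rmorphism rring zr -> L i}).
have qE : forall i s, q i s = h0 i s by move=> i s; rewrite /= dprojE eRE ffunE.
have qinj : forall s t, (forall i, q i s = q i t) -> s = t.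
  by move=> s t E; apply: ci => i; rewrite -!qE; exact: E.
have qsurj : forall y : (forall i, L i), exists s, forall i, q i s = y i.
  by move=> y; have [s hs] := cs y; exists s => i; rewrite qE; exact: hs.
have zp : fin_prod_ffields p (rring zr).
  pose K i := frr_ (f_field (dp_str x i)).
  have phiP : forall i, exists ph : {rmorphism rring zr -> K i}, forall s, ph s = q i s.
    move=> i.
    have Ha : zmod_morphism (q i : rring zr -> K i) by move=> a b; exact: rmorphB.
    have Hm : monoid_morphism (q i : rring zr -> K i).
      by split; [exact: rmorph1 | move=> a b; exact: rmorphM].
    by exists (mkRM Ha Hm).
  have [ph hph] := dchoice phiP.
  exists n, K, ph; split.
  - move=> i; apply/andP; split => //; apply/eqP.
    have [_ _ E] := f_field (dp_str x i); exact: E.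
  - by move=> s t E; apply: qinj => i; rewrite -!hph; exact: E.
  - by move=> y; have [s hs] := qsurj y; exists s => i; rewrite hph; exact: hs.
have [Xs _] := prod_pres hX qinj qsurj.
have [pt hpt] := Xs (fun i => f_pt (dp_str x i)).
exists (ZStr zp pt) => i; exists (q i); split => //= s.
have := hh0 i s; rewrite -qE; exact.
Qed.
End Surj.

Section Inj.
Variables (X : CRingFunctor) (hX : preserves_products X) (p : nat) (S : finType).
Local Notation F := (Fstr X p).

Lemma corr_inj (z z' : Zstr X p S) n (x : dprodn F n S) : Corr z x -> Corr z' x -> z = z'.
Proof.
case: z => r pr pt; case: z' => r' pr' pt'.
move=> /corr_fam [h hh] /corr_fam [h' hh'].
have hb : forall i s, s \in val (h i s : blocks _) by move=> i; case: (hh i).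
have hb' : forall i s, s \in val (h' i s : blocks _) by move=> i; case: (hh' i).
have he : forall i s, (h i s : blocks _) = (h' i s : blocks _).
  by move=> i s; apply: (blk_uniq (dp_partition x i) (hb i s) (hb' i s)).
have [_ ci cs _] := corr_decomp (z := ZStr pr pt) hb.
have E : r = r'.
  apply: ringstr_ext.
  - apply: ci => i; transitivity (0 : rring (f_ring (dp_str x i))); first exact: rmorph0.
    by rewrite he; symmetry; exact: (rmorph0 (h' i)).
  - apply: ci => i; transitivity (1 : rring (f_ring (dp_str x i))); first exact: rmorph1.
    by rewrite he; symmetry; exact: (rmorph1 (h' i)).
  - move=> s t; apply: ci => i.
    transitivity (h i s + h i t : rring (f_ring (dp_str x i))); first exact: rmorphD.
    by rewrite !he; symmetry; exact: (rmorphD (h' i)).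
  - move=> s; apply: ci => i.
    transitivity (- h i s : rring (f_ring (dp_str x i))); first exact: rmorphN.
    by rewrite !he; symmetry; exact: (rmorphN (h' i)).
  - move=> s t; apply: ci => i.
    transitivity (h i s * h i t : rring (f_ring (dp_str x i))); first exact: rmorphM.
    by rewrite !he; symmetry; exact: (rmorphM (h' i)).
subst r'; have -> : pr = pr' by apply: proof_irrelevance.
congr ZStr.
have [_ Xi] := prod_pres hX ci cs.
apply: Xi => i; case: (hh i) => _ ->.
rewrite (@Fmap_ext X _ _ (h i) (h' i) (he i)).
by case: (hh' i) => _ ->.
Qed.
End Inj.

Lemma mem_imset_bij (S T : finType) (g : S -> T) (gi : T -> S) (gK : cancel g gi)
  (gK' : cancel gi g) (B : {set S}) t : (t \in g @: B) = (gi t \in B).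
Proof.
apply/imsetP/idP => [[s sB ->]|H]; first by rewrite gK.
by exists (gi t) => //; rewrite gK'.
Qed.

Section Nat.
Variables (X : CRingFunctor) (p : nat) (S T : finType) (g : S -> T) (gi : T -> S)
  (gK : cancel g gi) (gK' : cancel gi g).
Local Notation F := (Fstr X p).

Lemma part_img (P : {set {set S}}) (hP : partition P [set: S]) :
  partition [set g @: (B : {set S}) | B : {set S} in P] [set: T].
Proof.
apply/and3P; split.
- apply/eqP/setP => t; rewrite inE; apply/bigcupP.
  have [B sB] := blk_ex hP (gi t).
  exists (g @: val B); first by apply: imset_f; exact: valP.
  by rewrite (mem_imset_bij gK gK').
- apply/trivIsetP => A' B' /imsetP[A AP ->] /imsetP[B BP ->] ne.
  rewrite -setI_eq0; apply/eqP/setP => t; rewrite !inE !(mem_imset_bij gK gK').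
  apply/negP => /andP[ta tb].
  have := blk_uniq hP (B1 := exist _ A AP) (B2 := exist _ B BP) ta tb.
  by move=> [E]; move: ne; rewrite E eqxx.
- apply/imsetP => -[B BP E].
  have [s sB] := blk_ne hP (exist _ B BP).
  by move/setP: E => /(_ (g s)); rewrite inE (mem_imset_bij gK gK') gK sB.
Qed.

Lemma str_img (z : Zstr X p S) (z' : Zstr X p T)
  (h : {rmorphism rring (z_ring z) -> rring (z_ring z')}) (hE : forall s, h s = g s)
  (hpt : Fmap h (z_pt z) = z_pt z') (P : {set {set S}}) (hP : partition P [set: S])
  (f : Fstr X p (blocks P)) (Cf : Cz z P f) :
  exists f' : Fstr X p (blocks [set g @: (B : {set S}) | B : {set S} in P]),
    Cz z' _ f' /\ exists hb : blocks P -> blocks [set g @: (B : {set S}) | B : {set S} in P],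
      (forall B, val (hb B) = g @: val B) /\ Ftr hb f f'.
Proof.
pose P' := [set g @: (B : {set S}) | B : {set S} in P].
pose be (B : blocks P) : blocks P' := exist _ (g @: val B) (imset_f _ (valP B)).
have besurj : forall B' : blocks P', exists B, be B = B'.
  move=> B'; have := valP B'; case/imsetP => B0 B0P E.
  by exists (exist _ B0 B0P); apply: val_inj; rewrite /= E.
have [ga hga] := @fchoice _ _ (fun B' B => be B = B') besurj.
have beinj : injective be.
  move=> B1 B2 /(congr1 val) /= E; apply: val_inj; apply/setP => s.
  by move/setP: E => /(_ (g s)); rewrite !(mem_imset_bij gK gK') gK.
have c1 : cancel ga be by [].
have c2 : cancel be ga by move=> B; apply: beinj; rewrite hga.
pose r' := @trs _ (rring (f_ring f)) ga be c1 c2.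
have [eR eRE] := @trs_e_ex _ (rring (f_ring f)) ga be c1 c2.
have [dR dRE] := @trs_d_ex _ (rring (f_ring f)) ga be c1 c2.
have d1 : cancel eR be by move=> B; rewrite eRE c1.
have d2 : cancel be eR by move=> B; rewrite eRE c2.
have hf : is_field_charp p (rring r') := field_transfer d1 d2 (f_field f).
case: Cf => hx [hbx hpx].
have h1 : cancel h gi by move=> s; rewrite hE gK.
have h2 : cancel gi h by move=> t; rewrite hE gK'.
have [hinv hinvE] := rmorph_inv h1 h2.
pose hz := (dR \o (hx \o hinv) : {rmorphism rring (z_ring z') -> rring r'}).
exists (FStr hf (Fmap dR (f_pt f))); split; last first.
  by exists be; split => //; exists dR; split.
exists hz; split => /=.
  move=> t; rewrite dRE /= (mem_imset_bij gK gK') -hinvE; exact: hbx.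
have HI : Fmap hinv (Fmap h (z_pt z)) = z_pt z.
  rewrite -(@FmapC X _ _ _ h hinv (hinv \o h : {rmorphism _ -> _})) //.
  by rewrite FmapI // => s; rewrite /= hinvE h1.
rewrite (@FmapC X _ _ _ (hx \o hinv : {rmorphism _ -> _}) dR hz) //.
rewrite (@FmapC X _ _ _ hinv hx (hx \o hinv : {rmorphism _ -> _})) //.
by rewrite -hpt HI hpx.
Qed.

Lemma corr_nat (z : Zstr X p S) (z' : Zstr X p T)
  (h : {rmorphism rring (z_ring z) -> rring (z_ring z')}) (hE : forall s, h s = g s)
  (hpt : Fmap h (z_pt z) = z_pt z') n (x : dprodn F n S) :
  Corr z x -> exists y : dprodn F n T, Corr z' y /\ dp_tr (@Ftr X p) g x y.
Proof.
move=> Cx.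
have [PF hPF] := @dchoice _ (fun i => {P' : {set {set T}} & Fstr X p (blocks P')})
  (fun i PF => [/\ projT1 PF = [set g @: (B : {set S}) | B : {set S} in dp_part x i],
      Cz z' (projT1 PF) (projT2 PF) &
      exists hb : blocks (dp_part x i) -> blocks (projT1 PF),
        (forall B, val (hb B) = g @: val B) /\ Ftr hb (dp_str x i) (projT2 PF)])
  (fun i => let: ex_intro f' Hf' := str_img hE hpt (dp_partition x i) (Cx i) in
     ex_intro _ (existT _ _ f') (let: conj a b := Hf' in And3 erefl a b)).
pose P' i := projT1 (PF i).
have hP' : forall i, partition (P' i) [set: T].
  move=> i; case: (hPF i) => E _ _; rewrite /P' E; exact: (part_img (dp_partition x i)).
have hc : forall B' : (forall i, blocks (P' i)), #|\bigcap_(i < n) val (B' i)| = 1%N.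
  move=> B'.
  have Bex : forall i, exists B : blocks (dp_part x i), val (B' i) = g @: val B.
    move=> i; case: (hPF i) => E _ _.
    have : val (B' i) \in [set g @: (B : {set S}) | B : {set S} in dp_part x i] by rewrite -E; exact: (valP (B' i)).
    move=> /imsetP [B0 B0P EB].
    by exists (exist _ B0 B0P).
  have [Bf hBf] := @dchoice _ (fun i => blocks (dp_part x i))
    (fun i B => val (B' i) = g @: val B) Bex.
  have := @dp_cart _ _ _ x Bf; move/eqP/cards1P => [s0 hs0].
  apply/eqP/cards1P; exists (g s0); apply/setP => t; rewrite inE.
  apply/bigcapP/eqP => [H|->].
    have : gi t \in \bigcap_(i < n) val (Bf i).
      by apply/bigcapP => i _; move: (H i isT); rewrite hBf (mem_imset_bij gK gK').
    by rewrite hs0 inE => /eqP <-; rewrite gK'.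
  move=> i _; rewrite hBf (mem_imset_bij gK gK') gK.
  have : s0 \in \bigcap_(i < n) val (Bf i) by rewrite hs0 inE.
  by move/bigcapP; apply.
pose y := @DProd F n T P' hP' hc (fun i => projT2 (PF i)).
exists y; split; first by move=> i; case: (hPF i).
have := @dchoice _ (fun i => blocks (dp_part x i) -> blocks (dp_part y i))
  (fun i hb => (forall B, val (hb B) = g @: val B) /\ Ftr hb (dp_str x i) (dp_str y i))
  (fun i => let: And3 _ _ c := hPF i in c).
by case=> hb Hb; exists hb; split => i; case: (Hb i).
Qed.
End Nat.

Local Close Scope ring_scope.

Section Quot.
Variables (F : finType -> Type) (S : finType).

Lemma quot_eq n (C1 C2 : quot (@dp_orbit F n S)) : sval C1 = sval C2 -> C1 = C2.
Proof.
case: C1 => P1 H1; case: C2 => P2 H2 /= E; subst P2; f_equal; apply: proof_irrelevance.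
Qed.

Definition cls n (x : dprodn F n S) : quot (@dp_orbit F n S) :=
  exist _ (dp_orbit x) (ex_intro _ x (fun y => iff_refl _)).

Lemma quot_mem_eq n (C C' : quot (@dp_orbit F n S)) x : sval C x -> sval C' x -> C = C'.
Proof.
case: C => P [a Ha]; case: C' => P' [b Hb] /= Px P'x; apply: quot_eq => /=.
apply: functional_extensionality => y; apply: propositional_extensionality.
have ax : dp_orbit a x by apply/Ha.
have bx : dp_orbit b x by apply/Hb.
rewrite (propositional_extensionality _ _ (Ha y)) (propositional_extensionality _ _ (Hb y)).
split => H.
- exact: (dorbit_trans (dorbit_trans bx (dorbit_sym ax)) H).
- exact: (dorbit_trans (dorbit_trans ax (dorbit_sym bx)) H).
Qed.

End Quot.

Section Main.
Variables (X : CRingFunctor) (p : nat) (S : finType).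
Local Notation F := (Fstr X p).

Definition zn (z : Zstr X p S) : nat := proj1_sig (constructive_indefinite_description _ (corr_ex z)).
Lemma zn_spec z : exists x : dprodn F (zn z) S, Corr z x.
Proof. exact: (proj2_sig (constructive_indefinite_description _ (corr_ex z))). Qed.
Definition zx (z : Zstr X p S) : dprodn F (zn z) S :=
  proj1_sig (constructive_indefinite_description _ (zn_spec z)).
Lemma zx_spec z : Corr z (zx z).
Proof. exact: (proj2_sig (constructive_indefinite_description _ (zn_spec z))). Qed.

Definition phi (z : Zstr X p S) : expD F S := existT _ (zn z) (cls (zx z)).

Lemma in_cls (z : Zstr X p S) m (x' : dprodn F m S) (Cx' : Corr z x') n (x : dprodn F n S)
  (Cx : Corr z x) : in_expD x (existT (fun k => quot (@dp_orbit F k S)) m (cls x')).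
Proof.
have E := corr_n Cx' Cx; subst n.
by exists (cls x'); split => //=; apply: corr_orbit Cx' Cx.
Qed.

Lemma in_phi (z : Zstr X p S) n (x : dprodn F n S) : Corr z x -> in_expD x (phi z).
Proof. move=> Cx; exact: (in_cls (@zx_spec z) Cx). Qed.

Lemma mem_cls_corr (z : Zstr X p S) m (x' : dprodn F m S) (Cx' : Corr z x') n
  (x : dprodn F n S) (C : quot (@dp_orbit F n S)) :
  existT (fun k => quot (@dp_orbit F k S)) m (cls x') = existT _ n C -> sval C x -> Corr z x.
Proof.
move=> E H; have Em := congr1 (@projT1 _ _) E; simpl in Em; subst m.
have E2 := inj_pair2_eq_dec _ Nat.eq_dec _ _ _ _ E.
rewrite -E2 in H; exact: corr_orbit_inv Cx' H.
Qed.

Lemma phi_inj (hX : preserves_products X) : injective phi.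
Proof.
move=> z1 z2 E.
have := in_phi (@zx_spec z2); rewrite -E => -[C [E' H]].
have K := mem_cls_corr (@zx_spec z1) E' H.
exact: (@corr_inj X hX p S z1 z2 _ (zx z2) K (@zx_spec z2)).
Qed.
End Main.

Lemma phi_surj (X : CRingFunctor) (hX : preserves_products X) (p : nat) (hp : prime p)
  (S : finType) (e : expD (Fstr X p) S) : exists z, phi z = e.
Proof.
case: e => n C; have [x Hx] := proj2_sig C.
have Cx : sval C x by apply/Hx; exact: dorbit_refl.
have [z Cz] := corr_surj hX hp x.
exists z; have [C' [E' H']] := in_phi Cz.
by rewrite E'; congr existT; apply: quot_mem_eq H' Cx.
Qed.

Theorem lemma4p5 (X : CRingFunctor) (hX : preserves_products X)
    (p : nat) (hp : prime p) :
  exists phi : forall S : finType, Zstr X p S -> expD (Fstr X p) S,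
    (forall S : finType, bijective (phi S)) /\
    (forall (S T : finType) (g : S -> T), bijective g ->
       forall (z : Zstr X p S) (z' : Zstr X p T),
         Ztr g z z' -> expD_tr (@Ftr X p) g (phi S z) (phi T z')).
Proof.
exists (fun S => @phi X p S); split.
  move=> S.
  have [psi hpsi] := @fchoice _ _ (fun e z => phi z = e) (phi_surj hX hp (S:=S)).
  exists psi => [z|e]; last exact: hpsi.
  by apply: (phi_inj hX); rewrite hpsi.
move=> S T g [gi gK gK'] z z' [h [hE hpt]].
have [y [Cy Hy]] := corr_nat gK gK' hE hpt (zx_spec (z:=z)).
exists (zn z), (zx z), y; split => //.
- exact: in_phi (zx_spec (z:=z)).
- exact: in_phi Cy.
Qed.
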